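(* Let $n\ge3$, $k\ge0$. If $S\subseteq\mathrm{Inc}(A,B)$ is a maximal independent set of $G_n^k$ which is not reversible, then $S$ contains a strict alternating cycle of size $3$.
   Context: For integers $n\ge3$, $k\ge0$, the crown $S_n^k$ is the poset with ground set $A\cup B$, $A=\{a_1,\dots,a_{n+k}\}$, $B=\{b_1,\dots,b_{n+k}\}$, indices cyclic modulo $n+k$; elements of $A$ are pairwise incomparable, as are elements of $B$, and $a_i$ is incomparable to $b_j$ when $j\in\{i,\dots,i+k\}$ (mod $n+k$), while $a_i<b_j$ otherwise. $\mathrm{Inc}(A,B)$ is the set of pairs $(a,b)\in A\times B$ with $a$ incomparable to $b$; $G_n^k$ has vertex set $\mathrm{Inc}(A,B)$ with $(a,b)$ adjacent to $(x,y)$ iff $a<y$ and $x<b$. A set $R\subseteq\mathrm{Inc}(A,B)$ is reversible if some linear extension $L$ of $S_n^k$ has $b<a$ in $L$ for all $(a,b)\in R$. An indexed set $\{(x_\alpha,y_\alpha):\alpha\in[m]\}\subseteq\mathrm{Inc}(A,B)$ is an alternating cycle of size $m$ if $x_\alpha\le y_{\alpha-1}$ for all $\alpha$ (indices cyclic mod $m$); it is strict if $x_\alpha\le y_\beta$ holds iff $\beta=\alpha-1$. *)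

(* Defs.v *)
From mathcomp Require Import all_boot.
Set Implicit Arguments. Unset Strict Implicit. Unset Printing Implicit Defensive.

(* The crown S_n^k.  Indices are taken in 'I_(n+k) (i.e. modulo n+k).
   Ground set: 'I_(n+k) + 'I_(n+k); [inl i] is a_i, [inr j] is b_j. *)
Definition crown_elt (n k : nat) : finType := ('I_(n+k) + 'I_(n+k))%type.

Definition aE n k (i : 'I_(n+k)) : crown_elt n k := inl i.
Definition bE n k (j : 'I_(n+k)) : crown_elt n k := inr j.

(* a_i is incomparable to b_j iff j \in {i, ..., i+k} (mod n+k),
   i.e. iff the cyclic offset (j - i) mod (n+k) is at most k. *)
Definition inc_idx (n k : nat) (i j : 'I_(n+k)) : bool :=
  ((j + (n + k) - i) %% (n + k) <= k)%N.

Definition crown_lt (n k : nat) (x y : crown_elt n k) : bool :=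
  match x, y with
  | inl i, inr j => ~~ inc_idx i j
  | _, _ => false
  end.

Definition crown_le (n k : nat) (x y : crown_elt n k) : bool :=
  (x == y) || crown_lt x y.

(* Inc(A,B): a pair (i,j) stands for (a_i, b_j). *)
Definition Inc (n k : nat) : {set 'I_(n+k) * 'I_(n+k)} :=
  [set p | inc_idx p.1 p.2].

Definition G_adj (n k : nat) (p q : 'I_(n+k) * 'I_(n+k)) : bool :=
  crown_lt (aE p.1) (bE q.2) && crown_lt (aE q.1) (bE p.2).

Definition independent (n k : nat) (S : {set 'I_(n+k) * 'I_(n+k)}) : Prop :=
  S \subset Inc n k /\ (forall p q, p \in S -> q \in S -> ~~ G_adj p q).

Definition maximal_independent (n k : nat) (S : {set 'I_(n+k) * 'I_(n+k)}) : Prop :=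
  independent S /\ (forall T, independent T -> S \subset T -> T = S).

Definition linear_extension (n k : nat) (L : rel (crown_elt n k)) : Prop :=
  reflexive L /\ antisymmetric L /\ transitive L /\ total L /\
  (forall x y, crown_le x y -> L x y).

Definition reversible (n k : nat) (R : {set 'I_(n+k) * 'I_(n+k)}) : Prop :=
  exists L : rel (crown_elt n k), linear_extension L /\
    (forall p, p \in R -> L (bE p.2) (aE p.1) && (bE p.2 != aE p.1)).

Definition alt_cycle (n k m : nat) (c : 'I_m -> 'I_(n+k) * 'I_(n+k)) : Prop :=
  (forall a, c a \in Inc n k) /\
  (forall a b : 'I_m, val b = ((val a + m).-1 %% m)%N ->
      crown_le (aE (c a).1) (bE (c b).2)).

Definition strict_alt_cycle (n k m : nat) (c : 'I_m -> 'I_(n+k) * 'I_(n+k)) : Prop :=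
  alt_cycle c /\
  (forall a b : 'I_m, crown_le (aE (c a).1) (bE (c b).2) <->
      val b = ((val a + m).-1 %% m)%N).

(* Main.v *)
From Stdlib Require Import Classical.
Require Import Defs.
From mathcomp Require Import all_boot.

Arguments inc_idx : simpl never.

Section Helpers.
Variables (n k : nat).
Local Notation inc := (@inc_idx n k).
Local Notation T := (crown_elt n k).

Lemma crown_le_ab (x y : 'I_(n+k)) : crown_le (aE x) (bE y) = ~~ inc x y.
Proof. by []. Qed.

Lemma G_adjE (p q : 'I_(n+k) * 'I_(n+k)) :
  G_adj p q = ~~ inc p.1 q.2 && ~~ inc q.1 p.2.
Proof. by []. Qed.

Variable S : {set 'I_(n+k) * 'I_(n+k)}.
Hypothesis HS : maximal_independent S.

Lemma S_inc {p} : p \in S -> inc p.1 p.2.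
Proof.
case: HS => [[sub _] _] pS; have := subsetP sub _ pS; by rewrite inE.
Qed.

Lemma S_nadj {p q} : p \in S -> q \in S -> ~~ (~~ inc p.1 q.2 && ~~ inc q.1 p.2).
Proof. case: HS => [[_ H] _] pS qS; rewrite -G_adjE; exact: H. Qed.

Lemma compose
  (N3 : ~ exists c : 'I_3 -> 'I_(n+k) * 'I_(n+k),
    (forall a, c a \in S) /\ strict_alt_cycle c)
  p q : p \in S -> q \in S -> ~~ inc q.1 p.2 -> (p.1, q.2) \in S.
Proof.
move=> pS qS hqp; case: (boolP ((p.1,q.2) \in S)) => // tS; exfalso.
have tI : inc p.1 q.2.
  apply/negPn/negP => h; have := S_nadj pS qS; by rewrite h hqp.
have [s [sS adj]] : exists s, s \in S /\ (~~ inc p.1 s.2 && ~~ inc s.1 q.2).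
  apply: NNPP => hno; case: HS => [[sub _] hmax].
  have Hind : independent ((p.1,q.2) |: S).
    split.
      apply/subsetP => x; rewrite !inE => /orP[/eqP->|xS]; first by [].
      by have := subsetP sub _ xS; rewrite inE.
    move=> x y; rewrite !inE => /orP[/eqP->|xS] /orP[/eqP->|yS]; rewrite G_adjE /=.
    - by rewrite tI.
    - by apply/negP => h; apply: hno; exists y.
    - by apply/negP => h; apply: hno; exists x; rewrite andbC.
    - exact: S_nadj.
  have Heq := hmax _ Hind (subsetUr _ _).
  move: tS; rewrite -Heq; by rewrite setU11.
case/andP: adj => hps hsq.
have pI := S_inc pS; have qI := S_inc qS; have sI := S_inc sS.
have hqs : inc q.1 s.2 by apply/negPn/negP => h; have := S_nadj qS sS; rewrite h hsq.
have hsp : inc s.1 p.2 by apply/negPn/negP => h; have := S_nadj sS pS; rewrite h hps.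
apply: N3.
exists (fun a : 'I_3 => if val a == 0 then p else if val a == 1 then q else s).
split; first by move=> [[|[|[|a]]] Ha].
split.
  split.
    move=> [[|[|[|a]]] Ha] /=; rewrite inE //.
  move=> [[|[|[|a]]] Ha] [[|[|[|b]]] Hb] //= H; rewrite crown_le_ab //.
move=> [[|[|[|a]]] Ha] [[|[|[|b]]] Hb] //=; rewrite crown_le_ab; split=> //=;
  try (move=> H; exfalso; move: H; by rewrite ?pI ?qI ?sI ?tI ?hqs ?hsp).
Qed.

End Helpers.

Section Rev.
Variables (n k : nat).
Local Notation inc := (@inc_idx n k).
Local Notation T := (crown_elt n k).
Variable S : {set 'I_(n+k) * 'I_(n+k)}.
Hypothesis HS : maximal_independent S.
Hypothesis Hc : forall p q, p \in S -> q \in S -> ~~ inc q.1 p.2 -> (p.1, q.2) \in S.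

Definition E : rel T := fun x y =>
  match x, y with
  | inl i, inr j => ~~ inc i j
  | inr j, inl i => (i, j) \in S
  | _, _ => false
  end.

Definition P (j : 'I_(n+k)) : pred T := fun z =>
  match z with
  | inl i => (i, j) \in S
  | inr j' => (j' == j) || [exists i, ((i, j) \in S) && ~~ inc i j']
  end.

Lemma P_closed j x y : P j x -> E x y -> P j y.
Proof.
case: x => [i|j']; case: y => [i'|j''] //=.
  move=> hij hn; apply/orP; right; apply/existsP; exists i; by rewrite hij.
case/orP => [/eqP->|/existsP[i0 /andP[h0 h1]]] //.
move=> hij'; exact: (Hc (i', j') (i0, j) hij' h0 h1).
Qed.

Lemma P_path j x pth : P j x -> path E x pth -> P j (last x pth).
Proof.
elim: pth x => [|z pth IH] x //= Px /andP[exz pz].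
apply: IH pz; exact: P_closed Px exz.
Qed.

Lemma reach j z : connect E (inr j) z -> P j z.
Proof.
move/connectP => [pth pp ->]; apply: P_path pp; by rewrite /= eqxx.
Qed.

Lemma acyc x y : E x y -> ~~ connect E y x.
Proof.
case: x => [i|j]; case: y => [i'|j'] //=.
  move=> hn; apply/negP => /reach /= hS.
  have := subsetP (proj1 (proj1 HS)) _ hS; rewrite inE /=.
  by rewrite (negbTE hn).
move=> hS; apply/negP => /connectP [[|z pth] /=]; first by [].
case/andP; case: z => [i0|j0] //= hn pp hl.
have : connect E (inr j0) (inl i').
  apply: connect_trans (connect1 (_ : E (inr j) (inl i'))) => //.
  apply/connectP; by exists pth.
move/reach => /= h.
have := subsetP (proj1 (proj1 HS)) _ h; rewrite inE /=.
by rewrite (negbTE hn).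
Qed.

Definition rk (x : T) := #|[set z | connect E z x]|.

Lemma rk_lt x y : E x y -> rk x < rk y.
Proof.
move=> exy; apply: proper_card; apply/properP; split.
  apply/subsetP => z; rewrite !inE => hz.
  exact: connect_trans hz (connect1 exy).
exists y; rewrite !inE ?connect0 //.
exact: acyc.
Qed.

Definition fr (x : T) := rk x * #|T| + enum_rank x.

Lemma fr_lt x y : E x y -> fr x < fr y.
Proof.
move=> /rk_lt h; rewrite /fr.
have e1 : (enum_rank x < #|T|)%N by [].
apply: (@leq_trans ((rk x).+1 * #|T|)).
  by rewrite mulSn addnC ltn_add2r.
apply: leq_trans (leq_addr _ _); by rewrite leq_mul2r h orbT.
Qed.

Lemma fr_inj : injective fr.
Proof.
move=> x y h.
have hr : rk x = rk y.
  have hx : forall a b : T, rk a < rk b -> fr a < fr b.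
    move=> a b hab; rewrite /fr.
    apply: (@leq_trans ((rk a).+1 * #|T|)).
      by rewrite mulSn addnC ltn_add2r.
    apply: leq_trans (leq_addr _ _); by rewrite leq_mul2r hab orbT.
  case: (ltngtP (rk x) (rk y)) => // hl.
    by move: (hx _ _ hl); rewrite h ltnn.
  by move: (hx _ _ hl); rewrite h ltnn.
move: h; rewrite /fr hr => /addnI /val_inj; exact: enum_rank_inj.
Qed.

Lemma rev_ok : reversible S.
Proof.
exists (fun x y => fr x <= fr y); split.
  split; first by move=> x; exact: leqnn.
  split; first by move=> x y /anti_leq /fr_inj.
  split; first by move=> y x z; exact: leq_trans.
  split; first by move=> x y; exact: leq_total.
  move=> x y /orP[/eqP->|hl]; first exact: leqnn.
  apply: ltnW; apply: fr_lt; case: x hl => [i|j]; case: y => [i'|j'] //.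
move=> [i j] hS /=; rewrite andbT; apply: ltnW; exact: fr_lt.
Qed.

End Rev.

Theorem lemma4p5 (n k : nat) (hn : (3 <= n)%N) (S : {set 'I_(n+k) * 'I_(n+k)}) :
  maximal_independent S -> ~ reversible S ->
  exists c : 'I_3 -> 'I_(n+k) * 'I_(n+k),
    (forall a, c a \in S) /\ strict_alt_cycle c.
Proof.
move=> HS Hnr; apply: NNPP => N3; apply: Hnr.
apply: (@rev_ok n k S HS) => p q; exact: (@compose n k S HS N3 p q).
Qed.
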